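(* Let $m\ge2$, $n\ge1$, $k\ge1$ an integer and $\mathcal{A}\in\mathbb{C}^{[m,n]}$. Then $R(\mathcal{A}^k)\le (R(\mathcal{A}))^{\mu_k}$, where $\mu_k=\frac{(m-1)^k-1}{m-2}$ if $m>2$ and $\mu_k=k$ if $m=2$.
   Context: $[n]=\{1,\ldots,n\}$. $\mathbb{C}^{[m,n]}$ denotes the set of order $m$, dimension $n$ complex tensors $\mathcal{A}=(a_{i_1\cdots i_m})$, $i_j\in[n]$. For a tensor $\mathcal{T}=(t_{i_1\cdots i_p})$ of order $p$ and dimension $n$: $r_i(\mathcal{T})=\sum_{i_2,\ldots,i_p=1}^n|t_{ii_2\cdots i_p}|$ and $R(\mathcal{T})=\max_{i\in[n]}r_i(\mathcal{T})$. General product: for $\mathcal{A}\in\mathbb{C}^{[m,n]}$ ($m\ge2$) and $\mathcal{B}\in\mathbb{C}^{[q,n]}$ ($q\ge1$), $\mathcal{A}\mathcal{B}=(c_{i\alpha_1\cdots\alpha_{m-1}})$ is the order $(m-1)(q-1)+1$, dimension $n$ tensor with $c_{i\alpha_1\cdots\alpha_{m-1}}=\sum_{i_2,\ldots,i_m=1}^n a_{ii_2\cdots i_m}b_{i_2\alpha_1}\cdots b_{i_m\alpha_{m-1}}$, $i\in[n]$, $\alpha_j\in[n]^{q-1}$ (where $b_{j\alpha}$ with $\alpha=(j_2,\ldots,j_q)$ means $b_{jj_2\cdots j_q}$). Powers: $\mathcal{A}^1=\mathcal{A}$ and $\mathcal{A}^{j+1}=\mathcal{A}\mathcal{A}^j$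 (general product; this product is associative). *)

(* Defs.v *)
From HB Require Import structures.
From mathcomp Require Import all_boot all_order all_algebra.
From mathcomp Require Import reals.
From mathcomp Require Export complex.
Set Implicit Arguments. Unset Strict Implicit. Unset Printing Implicit Defensive.
Import Order.TTheory GRing.Theory Num.Theory.
Local Open Scope ring_scope.

(* A tensor of order p.+1 and dimension n over C: entry t_{i i_2 ... i_{p+1}}
   is written  T i s  with  s = (i_2,...,i_{p+1}) : p.-tuple 'I_n. *)
Definition tensor (C : Type) (p n : nat) := 'I_n -> p.-tuple 'I_n -> C.

Section Tensors.
Variables (R : realType) (n : nat).
Notation C := (R[i]).

Definition row_abs_sum (p : nat) (T : tensor C p n) (i : 'I_n) : C :=
  \sum_(s : p.-tuple 'I_n) `|T i s|.

(* R(T) = max_i r_i(T)  (all r_i are >= 0, so 0 is a neutral start) *)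
Definition Rmax (p : nat) (T : tensor C p n) : C :=
  \big[Num.max/0]_(i < n) row_abs_sum T i.

Local Open Scope nat_scope.
Lemma blk_lt (a b : nat) (j : 'I_a) (l : 'I_b) : (j * b + l < a * b)%N.
Proof.
case: j l => j Hj [l Hl] /=.
apply: (@leq_trans ((j.+1) * b)); first by rewrite mulSn addnC ltn_add2r.
by rewrite leq_mul2r Hj orbT.
Qed.
Local Open Scope ring_scope.

Definition block (a b : nat) (t : (a * b).-tuple 'I_n) (j : 'I_a) : b.-tuple 'I_n :=
  [tuple tnth t (Ordinal (blk_lt j l)) | l < b].

(* General product of A (order m'.+1) and B (order q'.+1): order (m' * q').+1,
   c_{i alpha_1 ... alpha_{m'}} = sum_{i_2..i_m} a_{i i_2..i_m} prod_j b_{i_{j+1} alpha_j} *)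
Definition tprod (m' q' : nat) (A : tensor C m' n) (B : tensor C q' n)
  : tensor C (m' * q') n :=
  fun i t => \sum_(s : m'.-tuple 'I_n)
               A i s * \prod_(j < m') B (tnth s j) (block t j).

(* tord d j = (order of A^{j+1}) - 1 for A of order d.+1, i.e. d^(j+1) *)
Fixpoint tord (d j : nat) : nat := if j is j'.+1 then d * tord d j' else d.

(* tpow' A j = A^{j+1};  A^1 = A,  A^{j+1} = A A^j *)
Fixpoint tpow' (d : nat) (A : tensor C d n) (j : nat) : tensor C (tord d j) n :=
  match j return tensor C (tord d j) n with
  | 0 => A
  | j'.+1 => tprod A (@tpow' d A j')
  end.

Definition tpow (d : nat) (A : tensor C d n) (k : nat) : tensor C (tord d k.-1) n :=
  @tpow' d A k.-1.
End Tensors.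
Arguments row_abs_sum {R n p} T i.
Arguments Rmax {R n p} T.
Arguments tprod {R n m' q'} A B i t.
Arguments tpow' {R n d} A j.
Arguments tpow {R n d} A k.

Definition mu (m k : nat) : nat := (
  if 2 < m then ((m - 1) ^ k - 1) %/ (m - 2) else k)%N.

(* Main.v *)
Require Import Defs.
From HB Require Import structures.
From mathcomp Require Import all_boot all_order all_algebra.
From mathcomp Require Import reals complex.
From mathcomp Require Import zify.
Import Order.TTheory GRing.Theory Num.Theory.
Local Open Scope ring_scope.

Section Aux.
Variables (R : realType) (n : nat).
Notation C := (R[i]).

Lemma bigmax_ge0 (I : finType) (f : I -> C) :
  (forall i, 0 <= f i) -> 0 <= \big[Num.max/0]_(i : I) f i.
Proof.
move=> H; apply: (big_ind (fun x : C => 0 <= x)) => // x y hx hy.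
by rewrite comparable_le_max ?hx // real_comparable // ger0_real.
Qed.

Lemma rowsum_ge0 p (T : tensor C p n) i : 0 <= row_abs_sum T i.
Proof. by apply: sumr_ge0 => s _; rewrite normr_ge0. Qed.

Lemma Rmax_ge0 p (T : tensor C p n) : 0 <= Rmax T.
Proof. by apply: bigmax_ge0 => i; apply: rowsum_ge0. Qed.

Lemma bigmax_seq_ge (r : seq 'I_n) (f : 'I_n -> C) i :
  (forall j, 0 <= f j) -> i \in r -> f i <= \big[Num.max/0]_(j <- r) f j.
Proof.
move=> H; elim: r => [|x r IH] //; rewrite inE big_cons => /orP[/eqP->|ir].
  rewrite comparable_le_max ?lexx // real_comparable // ger0_real //.
  by apply: (big_ind (fun x : C => 0 <= x)) => // y z hy hz;
    rewrite comparable_le_max ?hy // real_comparable // ger0_real.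
rewrite comparable_le_max ?IH ?orbT // real_comparable // ger0_real //.
by apply: (big_ind (fun x : C => 0 <= x)) => // y z hy hz;
  rewrite comparable_le_max ?hy // real_comparable // ger0_real.
Qed.

Lemma Rmax_ge p (T : tensor C p n) i : row_abs_sum T i <= Rmax T.
Proof.
apply: bigmax_seq_ge; first exact: rowsum_ge0.
by rewrite mem_index_enum.
Qed.

Lemma Rmax_le p (T : tensor C p n) c :
  0 <= c -> (forall i, row_abs_sum T i <= c) -> Rmax T <= c.
Proof.
move=> c0 H.
suff: 0 <= Rmax T <= c by case/andP.
rewrite /Rmax; apply: (big_ind (fun x : C => 0 <= x <= c)); first by rewrite lexx c0.
  move=> x y /andP[x0 xc] /andP[y0 yc].
  by rewrite comparable_le_max ?x0 ?comparable_ge_max ?xc ?yc // real_comparable // ger0_real.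
by move=> i _; rewrite rowsum_ge0 H.
Qed.

Lemma block_inj (a b : nat) (t1 t2 : (a * b).-tuple 'I_n) :
  (forall j, block t1 j = block t2 j) -> t1 = t2.
Proof.
move=> H; apply: eq_from_tnth => x.
have b0 : (0 < b)%N.
  case: b t1 t2 H x => // t1 t2 H [x]; by rewrite muln0.
have hj : (x %/ b < a)%N by rewrite ltn_divLR // ltn_ord.
have hl : (x %% b < b)%N by rewrite ltn_pmod.
have E : x = Ordinal (blk_lt (Ordinal hj) (Ordinal hl)).
  by apply: val_inj => /=; rewrite -divn_eq.
have := congr1 (fun u => tnth u (Ordinal hl)) (H (Ordinal hj)).
by rewrite /block !tnth_mktuple -E.
Qed.

Lemma sum_blocks (a b : nat) (F : 'I_a -> b.-tuple 'I_n -> C) :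
  (forall j u, 0 <= F j u) ->
  \sum_(t : (a * b).-tuple 'I_n) \prod_(j < a) F j (block t j)
  <= \prod_(j < a) \sum_(u : b.-tuple 'I_n) F j u.
Proof.
move=> F0.
rewrite bigA_distr_bigA /=.
pose h := fun t : (a * b).-tuple 'I_n => [ffun j => block t j].
have hinj : {in [set: (a * b).-tuple 'I_n] &, injective h}.
  move=> t1 t2 _ _ /ffunP E; apply: block_inj => j.
  by have := E j; rewrite !ffunE.
have -> : \sum_(t : (a * b).-tuple 'I_n) \prod_(j < a) F j (block t j) =
   \sum_(f in [set h x | x in [set: (a * b).-tuple 'I_n]]) \prod_(j < a) F j (f j).
  rewrite big_imset //=; apply: eq_big => [t|t _]; first by rewrite in_setT.
  by apply: eq_bigr => j _; rewrite ffunE.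
rewrite [X in _ <= X](bigID (fun f => f \in [set h x | x in [set: (a * b).-tuple 'I_n]])) /=.
apply: ler_wpDr; first by apply: sumr_ge0 => f _; apply: prodr_ge0 => j _.
by rewrite lexx.
Qed.
End Aux.

Section Aux2.
Variables (R : realType) (n : nat).
Notation C := (R[i]).

Lemma Rmax_tprod m' q' (A : tensor C m' n) (B : tensor C q' n) :
  Rmax (tprod A B) <= Rmax A * Rmax B ^+ m'.
Proof.
apply: Rmax_le; first by rewrite mulr_ge0 ?exprn_ge0 ?Rmax_ge0.
move=> i; rewrite /row_abs_sum /tprod.
apply: (le_trans (y := \sum_(t : (m' * q').-tuple 'I_n) \sum_(s : m'.-tuple 'I_n)
     `|A i s| * \prod_(j < m') `|B (tnth s j) (block t j)|)).
  apply: ler_sum => t _; apply: (le_trans (ler_norm_sum _ _ _)); apply: ler_sum => s _.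
  by rewrite normrM normr_prod.
rewrite exchange_big /=.
apply: (le_trans (y := \sum_(s : m'.-tuple 'I_n) `|A i s| * Rmax B ^+ m')).
  apply: ler_sum => s _; rewrite -mulr_sumr; apply: ler_wpM2l; first exact: normr_ge0.
  apply: (le_trans (@sum_blocks R n m' q' (fun j u => `|B (tnth s j) u|) _)).
    by move=> j u; rewrite normr_ge0.
  have -> : Rmax B ^+ m' = \prod_(j < m') Rmax B by rewrite prodr_const card_ord.
  apply: ler_prod => j _; rewrite sumr_ge0 //=; first exact: Rmax_ge.
rewrite -mulr_suml; apply: ler_wpM2r; first by rewrite exprn_ge0 ?Rmax_ge0.
exact: Rmax_ge.
Qed.

End Aux2.

Lemma mu1 m : (2 <= m)%N -> mu m 1 = 1%N.
Proof.
rewrite /mu; case: ifP => // lt2m _; rewrite expn1.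
have -> : (m - 1 - 1 = m - 2)%N by rewrite -subnDA.
by rewrite divnn; case: m lt2m => [|[|[|m]]].
Qed.

Lemma mu_rec m k : (2 <= m)%N -> mu m k.+1 = (mu m k * m.-1).+1.
Proof.
rewrite /mu; case: ifP => [lt2m _|]; last first.
  by case: m => [|[|[|m]]] //= _ _; rewrite muln1.
case: m lt2m => [|[|[|d]]] // _.
have -> : (d.+3 - 1 = d.+2)%N by rewrite subn1.
have -> : (d.+3 - 2 = d.+1)%N by rewrite subn2.
have [q Hq] : exists q, (d.+2 ^ k = q * d.+1 + 1)%N.
  elim: k => [|k [q Hq]]; first by exists 0%N.
  exists (d.+2 * q + 1)%N; rewrite expnS Hq; nia.
have -> : (d.+2 ^ k.+1 - 1 = (d.+2 * q + 1) * d.+1)%N by rewrite expnS Hq; nia.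
rewrite Hq addnK !mulnK //=; nia.
Qed.

Theorem corollary2p5 (R : realType) (m n k : nat) (A : tensor R[i] m.-1 n) :
  (2 <= m)%N -> (1 <= n)%N -> (1 <= k)%N ->
  Rmax (tpow A k) <= Rmax A ^+ mu m k.
Proof.
move=> m2 _; case: k => [//|k] _; rewrite /tpow /=.
elim: k => [|k IH]; first by rewrite mu1 // expr1.
rewrite /= mu_rec // exprS exprM.
apply: le_trans; first exact: Rmax_tprod.
apply: ler_wpM2l; first exact: Rmax_ge0.
apply: lerXn2r => //; try rewrite nnegrE; try exact: Rmax_ge0.
by apply: exprn_ge0; apply: Rmax_ge0.
Qed.
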